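(* In the post-attack setting with control policy $\gamma$ and attack policy $\phi$ (described in the context), suppose the state–action chain $\{(X_t,A_t)\}_{t\ge0}$ satisfies the Doeblin condition with parameters $(m_0,\lambda)$. Let $Z_t=(X_t,A_t,Y_t)$, let $\Omega(\gamma,\phi)=\{(z,z'):\mathbb P(Z_{t+1}=z'\mid Z_t=z)>0\}$, and let $f:\Omega(\gamma,\phi)\to\mathbb R$ with $\|f\|=\sup_{w\in\Omega(\gamma,\phi)}|f(w)|<\infty$. Set $S_n=\sum_{t=0}^{n-1}f(Z_t,Z_{t+1})$, $\lambda_1=\lambda R_{\min}\gamma_{\min}^2\phi_{\min}^2$ and $\mu=2(m_0+2)\|f\|/\lambda_1$. Then for every $\epsilon>0$ and every $n>\mu/\epsilon$, $$\mathbb P\big(|S_n-\mathbb E[S_n]|\ge n\epsilon\big)\le 2\exp\Big(-2\frac{(n\epsilon-\mu)^2}{n\mu^2}\Big).$$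
   Context: $\mathcal X=\{1,\dots,n\}$, $\mathcal A=\{1,\dots,m\}$; kernel $R_{(i,j),i'}=\mathbb P(X_{t+1}=i'\mid X_t=i,A_t=j)$; control policy $\gamma_{l,j}=\mathbb P(A_t=j\mid Y_t=l)$; attack policy $\phi_{(i,i'),l'}=\mathbb P(Y_{t+1}=l'\mid X_{t+1}=i',X_t=i)$. Given the past, $X_{t+1}\sim R_{(X_t,A_t),\cdot}$, then $Y_{t+1}\sim\phi_{(X_t,X_{t+1}),\cdot}$ conditionally independent of the rest given $(X_t,X_{t+1})$, then $A_{t+1}\sim\gamma_{Y_{t+1},\cdot}$ conditionally independent of the rest given $Y_{t+1}$. $R_{\min},\gamma_{\min},\phi_{\min}$ are the smallest nonzero entries of $R,\gamma,\phi$. Doeblin condition: a chain $W_t$ on a finite set $\mathcal W$ satisfies it with $(m_0,\lambda)$ if there is a probability measure $\psi$ on $\mathcal W$ with $\mathbb P(W_{m_0}\in B\mid W_0=w)\ge\lambda\psi(B)$ for all $w$, $B\subset\mathcal W$. *)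

(* Defs.v *)
From mathcomp Require Import all_boot all_order all_algebra.
From mathcomp Require Import reals.
From mathcomp Require Import sequences exp.
Set Implicit Arguments. Unset Strict Implicit. Unset Printing Implicit Defensive.
Import Order.TTheory GRing.Theory Num.Theory.
Local Open Scope ring_scope.

Section PostAttack.
Variable R : realType.

Definition stochastic {A B : finType} (K : A -> B -> R) : Prop :=
  (forall a b, 0 <= K a b) /\ (forall a, \sum_(b : B) K a b = 1).

Definition distribution {A : finType} (p : A -> R) : Prop :=
  (forall a, 0 <= p a) /\ \sum_(a : A) p a = 1.

Definition min_nonzero {A B : finType} (K : A -> B -> R) : R :=
  \big[Num.min/1]_(a : A) \big[Num.min/1]_(b : B | K a b != 0) K a b.

Variables (n m : nat).
(* states 'I_n, actions 'I_m, observations 'I_n *)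
Definition XA := ('I_n * 'I_m)%type.
Definition Zs := ('I_n * 'I_m * 'I_n)%type.

Variables (Rk : XA -> 'I_n -> R) (gam : 'I_n -> 'I_m -> R)
          (phi : 'I_n * 'I_n -> 'I_n -> R).

(* transition kernel of Z_t = (X_t, A_t, Y_t) *)
Definition Zkernel (z z' : Zs) : R :=
  let: (x, a, _) := z in let: (x', a', y') := z' in
  Rk (x, a) x' * phi (x, x') y' * gam y' a'.

Definition XAkernel (w w' : XA) : R :=
  \sum_(y' : 'I_n) Rk w w'.1 * phi (w.1, w'.1) y' * gam y' w'.2.

End PostAttack.

Fixpoint kpow (R : realType) (W : finType) (Q : W -> W -> R) (k : nat)
  (w w' : W) : R :=
  match k with
  | 0 => (w == w')%:R
  | k'.+1 => \sum_(v : W) kpow Q k' w v * Q v w'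
  end.

Definition doeblin (R : realType) (W : finType) (Q : W -> W -> R)
  (m0 : nat) (lam : R) : Prop :=
  0 < lam /\
  exists psi : W -> R, distribution psi /\
    forall (w : W) (B : {set W}),
      lam * (\sum_(w' in B) psi w') <= \sum_(w' in B) kpow Q m0 w w'.

Definition path_prob (R : realType) (Z : finType) (p0 : Z -> R)
  (K : Z -> Z -> R) (N : nat) (w : {ffun 'I_N.+1 -> Z}) : R :=
  p0 (w ord0) * \prod_(t < N) K (w (widen_ord (leqnSn N) t)) (w (lift ord0 t)).

Definition Ssum (R : realType) (Z : finType) (f : Z -> Z -> R) (N : nat)
  (w : {ffun 'I_N.+1 -> Z}) : R :=
  \sum_(t < N) f (w (widen_ord (leqnSn N) t)) (w (lift ord0 t)).

Definition supnorm_Omega (R : realType) (Z : finType) (K : Z -> Z -> R)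
  (f : Z -> Z -> R) : R :=
  \big[Num.max/0]_(p : Z * Z | 0 < K p.1 p.2) `|f p.1 p.2|.

(* Main.v *)
Require Import Defs.
From mathcomp Require Import all_boot all_order all_algebra.
From mathcomp Require Import reals.
From mathcomp Require Import sequences exp.
From mathcomp Require Import ring lra.
From mathcomp Require Import boolp classical_sets functions topology normedtype derive realfun.
Import Order.TTheory GRing.Theory Num.Theory.
Import numFieldNormedType.Exports.
Local Open Scope classical_set_scope.
Local Open Scope ring_scope.

Section Calc.
Variable R : realType.
Lemma incr_of_deriv (f df : R -> R) (a b : R) : a <= b ->
  (forall x : R, is_derive x 1 f (df x)) -> (forall x, a <= x <= b -> 0 <= df x) -> f a <= f b.
Proof.
move=> ab fd dpos; case: (ltgtP a b) ab => // [altb|->] _; last by [].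
have cf : {within `[a, b], continuous f}.
  apply: continuous_subspaceT => x.
  apply: differentiable_continuous; apply/derivable1_diffP.
  by have [] := fd x.
have [c cab eq] := MVT altb (fun x _ => fd x) cf.
rewrite -subr_ge0 eq; apply: mulr_ge0; last by rewrite subr_ge0 ltW.
by apply: dpos; move: cab; rewrite in_itv /= => /andP[/ltW -> /ltW ->].
Qed.
Lemma is_deriveV' (f : R -> R) (x : R) (df : R) : f x != 0 -> is_derive x 1 f df ->
  is_derive x 1 (fun y => (f y)^-1) (- (f x)^-2 * df).
Proof.
move=> fx0 [hder hval]; apply: DeriveDef; first exact: derivableV.
by rewrite deriveV // hval.
Qed.

Lemma decr_of_deriv (f df : R -> R) (a b : R) : a <= b ->
  (forall x : R, is_derive x 1 f (df x)) -> (forall x, a <= x <= b -> df x <= 0) -> f b <= f a.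
Proof.
move=> ab fd dneg.
have h := @incr_of_deriv (fun y => - f y) (fun y => - df y) a b ab.
rewrite -lerN2; apply: h => x xab; by rewrite oppr_ge0 dneg.
Qed.

Arguments is_deriveV' {f x df}.
Arguments incr_of_deriv {f df a b}.
Arguments decr_of_deriv {f df a b}.

Lemma KL (p u : R) : 0 <= p <= 1 ->
  (1 - p) * expR (- (p * u)) + p * expR ((1 - p) * u) <= expR (u ^+ 2 / 8).
Proof.
move=> /andP[p0 p1].
pose D := fun u : R => 1 - p + p * expR u.
have Dpos v : 0 < D v.
  rewrite /D; have := expR_gt0 v => e0; nra.
have dD (x : R) : is_derive x 1 D (p * expR x).
  by apply: is_derive_eq; rewrite add0r mul1r.
pose G := fun u : R => u / 4 + (1 - p) * (D u)^-1.
have dG (x : R) : is_derive x 1 G (1/4 - (1 - p) * ((D x)^-2 * (p * expR x))).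
  have h := is_deriveV' (lt0r_neq0 (Dpos x)) (dD x).
  rewrite /G; apply: is_derive_eq.
  rewrite scaler0 add0r.
  have e1 : forall a b : R, a *: b = a * b by [].
  have e2 : forall a : R, a%:A = a by move=> a; rewrite /GRing.scale /= mulr1.
  rewrite !e1; ring.
have dGpos (x : R) : 0 <= 1/4 - (1 - p) * ((D x)^-2 * (p * expR x)).
  have dx := Dpos x; have ex := expR_gt0 x.
  have -> : 1/4 - (1 - p) * ((D x)^-2 * (p * expR x)) =
     (D x ^+ 2 - 4 * (1 - p) * p * expR x) / (4 * D x ^+ 2).
    by field; rewrite lt0r_neq0.
  apply: divr_ge0; last by nra.
  suff -> : D x ^+ 2 - 4 * (1 - p) * p * expR x = (1 - p - p * expR x) ^+ 2 by apply: sqr_ge0.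
  by rewrite /D; ring.
have G0 : G 0 = 1 - p by rewrite /G /D expR0 mul0r add0r mulr1 subrK invr1 mulr1.
pose Phi := fun u : R => ln (D u) - p * u - u ^+ 2 / 8.
have dPhi (x : R) : is_derive x 1 Phi ((1 - p) - G x).
  have h := is_derive1_comp (is_derive1_ln (Dpos x)) (dD x).
  rewrite /Phi; apply: is_derive_eq.
  have e1 : forall a b : R, a *: b = a * b by [].
  rewrite !e1 /G /= /D; field.
  by rewrite lt0r_neq0 // (Dpos x).
have Phi0 : Phi 0 = 0 by rewrite /Phi /D expR0 mulr1 subrK ln1 mulr0 expr0n /= mul0r !subr0.
have PhiL : Phi u <= 0.
  suff: Phi u <= Phi 0 by rewrite Phi0.
  case: (leP 0 u) => u0.

    apply: (decr_of_deriv u0 dPhi) => x /andP[x0 _].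
    by rewrite subr_le0 -G0; apply: (incr_of_deriv x0 dG) => y _; exact: dGpos.
  apply: (incr_of_deriv (ltW u0) dPhi) => x /andP[_ x0].
  by rewrite subr_ge0 -G0; apply: (incr_of_deriv x0 dG) => y _; exact: dGpos.
have lnD : ln (D u) <= p * u + u ^+ 2 / 8 by move: PhiL; rewrite /Phi; lra.
have DD : D u <= expR (p * u + u ^+ 2 / 8).
  by rewrite -[D u]lnK ?ler_expR // posrE Dpos.
have -> : (1 - p) * expR (- (p * u)) + p * expR ((1 - p) * u) = expR (- (p * u)) * D u.
  rewrite /D mulrDr mulrDr mulrA [expR _ * p]mulrC -mulrA -expRD.
  have -> : (1 - p) * u = - (p * u) + u by ring.
  ring.
apply: (@le_trans _ _ (expR (- (p * u)) * expR (p * u + u ^+ 2 / 8))).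
  by rewrite ler_pM2l ?expR_gt0.
by rewrite -expRD addrA addNr add0r.
Qed.
End Calc.

Section Hoeff.
Variable R : realType.

Lemma chord (s a L x : R) : 0 < L -> a <= x -> x <= a + L ->
  L * expR (s * x) <= (a + L - x) * expR (s * a) + (x - a) * expR (s * (a + L)).
Proof.
move=> L0 ax xaL.
set E := expR (s * x).
have eA : expR (s * a) = E * expR (s * a - s * x) by rewrite /E -expRD; congr expR; ring.
have eB : expR (s * (a + L)) = E * expR (s * (a + L) - s * x) by rewrite /E -expRD; congr expR; ring.
have h1 := expR_ge1Dx (s * a - s * x).
have h2 := expR_ge1Dx (s * (a + L) - s * x).
rewrite eA eB.
have E0 : 0 < E := expR_gt0 _.
have k1 : 0 <= a + L - x by lra.
have k2 : 0 <= x - a by lra.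
apply: (@le_trans _ _ ((a + L - x) * (E * (1 + (s * a - s * x))) +
   (x - a) * (E * (1 + (s * (a + L) - s * x))))).
  have -> : (a + L - x) * (E * (1 + (s * a - s * x))) +
   (x - a) * (E * (1 + (s * (a + L) - s * x))) = L * E by ring.
  by [].
by apply: lerD; apply: ler_wpM2l => //; apply: ler_wpM2l => //; exact: ltW.
Qed.

Lemma hoeff (T : finType) (q X : T -> R) (L s : R) :
  (forall t, 0 <= q t) -> \sum_t q t = 1 -> \sum_t q t * X t = 0 ->
  (forall t t', 0 < q t -> 0 < q t' -> X t - X t' <= L) ->
  \sum_t q t * expR (s * X t) <= expR (s ^+ 2 * L ^+ 2 / 8).
Proof.
move=> q0 q1 qX hL.
have : ~~ [forall t, q t <= 0].
  apply/negP => /forallP H.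
  have : \sum_t q t <= 0 by apply: sumr_le0 => t _; exact: H.
  by rewrite q1 ler10.
rewrite negb_forall => /existsP[t0]; rewrite -ltNge => qt0.
case: (@arg_minP _ _ T t0 (fun t => 0 < q t) X qt0) => tm qtm tmmin.
set a := X tm.
have Xge t : 0 < q t -> a <= X t by move=> h; apply: tmmin.
have Xle t : 0 < q t -> X t <= a + L by move=> h; have := hL t tm h qtm; rewrite /a; lra.
have L0 : 0 <= L by have := hL t0 t0 qt0 qt0; rewrite subrr.
have qcase t : q t = 0 \/ 0 < q t.
  by have := q0 t; rewrite le_eqVlt => /orP[/eqP<-|->]; [left|right].
have a0 : a <= 0.
  rewrite -qX -[a]mul1r -q1 big_distrl /=; apply: ler_sum => t _.
  by case: (qcase t) => [->|qp]; [rewrite !mul0r | rewrite ler_pM2l // Xge].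
have aL0 : 0 <= a + L.
  rewrite -qX -[a + L]mul1r -q1 big_distrl /=; apply: ler_sum => t _.
  by case: (qcase t) => [->|qp]; [rewrite !mul0r | rewrite ler_pM2l // Xle].
case: (eqVneq L 0) => [LL|Lne].
  have aa : a = 0 by move: a0 aL0; rewrite LL addr0; lra.
  rewrite LL expr0n /= mulr0 mul0r expR0 -q1 le_eqVlt; apply/orP; left; apply/eqP.
  apply: eq_bigr => t _; case: (qcase t) => [->|qp]; first by rewrite mul0r.
  have : X t = 0 by have := Xge t qp; have := Xle t qp; rewrite LL addr0 aa; lra.
  by move=> ->; rewrite mulr0 expR0 mulr1.
have Lp : 0 < L by rewrite lt_neqAle eq_sym Lne L0.
set A := expR (s * a); set B := expR (s * (a + L)).
pose c1 := ((a + L) * A - a * B) / L.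
pose c2 := (B - A) / L.
apply: (@le_trans _ _ (\sum_t (q t * c1 + (q t * X t) * c2))).
  apply: ler_sum => t _.
  have -> : q t * c1 + q t * X t * c2 = q t * (((a + L - X t) * A + (X t - a) * B) / L).
    by rewrite /c1 /c2; field; rewrite lt0r_neq0.
  case: (qcase t) => [->|qp]; first by rewrite !mul0r.
  rewrite ler_pM2l // ler_pdivlMr // mulrC.
  exact: chord (Xge t qp) (Xle t qp).
rewrite big_split /= -!big_distrl /= q1 qX mul1r mul0r addr0.
have p01 : 0 <= - a / L <= 1.
  apply/andP; split; first by apply: divr_ge0 => //; lra.
  by rewrite ler_pdivrMr // mul1r; lra.
have := @KL R (- a / L) (s * L) p01.
have e1 : - (- a / L * (s * L)) = s * a by field; rewrite lt0r_neq0.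
have e2 : (1 - - a / L) * (s * L) = s * (a + L) by field; rewrite lt0r_neq0.
rewrite e1 e2 -/A -/B exprMn.
have -> : (1 - - a / L) * A + - a / L * B = c1 by rewrite /c1; field; rewrite lt0r_neq0.
by [].
Qed.
End Hoeff.

Section Osc.
Variable R : realType.

Definition osc {T : Type} (u : T -> R) (c : R) := forall x y, u x - u y <= c.

Lemma osc_lemma (T : finType) (a b u : T -> R) (c : R) (t0 : T) :
  (forall t, 0 <= a t) -> (forall t, 0 <= b t) -> \sum_t a t = \sum_t b t ->
  osc u c -> \sum_t a t * u t - \sum_t b t * u t <= (\sum_t a t) * c.
Proof.
move=> a0 b0 ab hu.
case: (@arg_minP _ _ T t0 predT u erefl) => tm _ tmmin.
have h1 : \sum_t a t * u t <= \sum_t a t * (u tm + c).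
  apply: ler_sum => t _; apply: ler_wpM2l => //.
  by have := hu t tm; lra.
have h2 : \sum_t b t * u tm <= \sum_t b t * u t.
  by apply: ler_sum => t _; apply: ler_wpM2l => //; apply: tmmin.
move: h1 h2; rewrite -!big_distrl /= -ab => h1 h2.
have : \sum_t a t * (u tm + c) = (\sum_t a t) * u tm + (\sum_t a t) * c.
  by rewrite -mulrDr big_distrl.
lra.
Qed.

Lemma oscD {T : Type} (u v : T -> R) c1 c2 : osc u c1 -> osc v c2 ->
  osc (fun z => u z + v z) (c1 + c2).
Proof. by move=> h1 h2 x y; have := h1 x y; have := h2 x y; lra. Qed.

Lemma osc_le {T : Type} (u : T -> R) c1 c2 : osc u c1 -> c1 <= c2 -> osc u c2.
Proof. by move=> h1 h x y; apply: le_trans (h1 x y) h. Qed.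

End Osc.
Arguments osc {R T}.
Arguments oscD {R T u v c1 c2}.
Arguments osc_le {R T u c1 c2}.

Section Chain.
Variable R : realType.
Variable Z : finType.
Variable K : Z -> Z -> R.
Hypothesis K0 : forall z z', 0 <= K z z'.
Hypothesis K1 : forall z, \sum_z' K z z' = 1.

Definition Kop (u : Z -> R) : Z -> R := fun z => \sum_z' K z z' * u z'.

Lemma Kop_osc u c : osc u c -> osc (Kop u) c.
Proof.
move=> hu x y; rewrite /Kop.
have := @osc_lemma R Z (K x) (K y) u c x (K0 x) (K0 y).
by rewrite !K1 mul1r; apply.
Qed.

Lemma iter_osc k u c : osc u c -> osc (iter k Kop u) c.
Proof. by move=> hu; elim: k => //= k IH; apply: Kop_osc. Qed.

Lemma Kop_lin u v : Kop (fun z => u z + v z) = fun z => Kop u z + Kop v z.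
Proof.
by apply: funext => z; rewrite /Kop -big_split /=; apply: eq_bigr => z' _; rewrite mulrDr.
Qed.

Lemma iter_lin k u v :
  iter k Kop (fun z => u z + v z) = fun z => iter k Kop u z + iter k Kop v z.
Proof. by elim: k => //= k ->; rewrite Kop_lin. Qed.

Variable h : Z -> R.

Fixpoint Gf (T : nat) : Z -> R :=
  match T with 0 => fun _ => 0 | T'.+1 => fun z => h z + Kop (Gf T') z end.

Lemma GfD T M : Gf (T + M) = fun z => Gf M z + iter M Kop (Gf T) z.
Proof.
elim: M => [|M IH]; first by apply: funext => z; rewrite addn0 /= add0r.
by rewrite addnS /= IH Kop_lin; apply: funext => z /=; rewrite addrA.
Qed.

Variable F : R.
Hypothesis hF : forall z, `|h z| <= F.

Lemma F0 (z : Z) : 0 <= F.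
Proof. exact: le_trans (normr_ge0 _) (hF z). Qed.

Lemma h_osc : osc h (2 * F).
Proof.
move=> x y; have := hF x; have := hF y.
rewrite !ler_norml => /andP[a1 a2] /andP[b1 b2]; lra.
Qed.

Lemma Gf_osc_lin T : osc (Gf T) (2 * F * T%:R).
Proof.
elim: T => [|T IH]; first by move=> x y; rewrite /= subrr mulr0.
rewrite /=; apply: (osc_le (oscD h_osc (Kop_osc _ _ IH))).
have -> : T.+1%:R = T%:R + 1 :> R by rewrite mulrSr.
by rewrite mulrDr mulr1 addrC.
Qed.

Variables (M : nat) (lam : R).
Hypothesis M0 : (0 < M)%N.
Hypothesis lam0 : 0 < lam.
Hypothesis lam1 : lam <= 1.
Hypothesis contr : forall u c, osc u c -> osc (iter M Kop u) ((1 - lam) * c).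

Lemma Gf_osc T : osc (Gf T) (2 * F * M%:R / lam).
Proof.
elim/ltn_ind: T => T IH.
case: (ltnP T M) => TM.
  move=> x y; apply: le_trans (Gf_osc_lin T x y) _.
  move: (F0 x) => F0x.
  apply: (@le_trans _ _ (2 * F * M%:R)).
    by apply: ler_wpM2l; [lra | rewrite ler_nat ltnW].
  rewrite ler_pdivlMr //.
  have X0 : 0 <= 2 * F * M%:R by apply: mulr_ge0; [lra | by rewrite ler0n].
  by rewrite -[X in _ <= X]mulr1; apply: ler_wpM2l.
have -> : T = (T - M + M)%N by rewrite subnK.
rewrite GfD.
have h1 := Gf_osc_lin M.
have lt : (T - M < T)%N by rewrite ltn_subrL M0 /= (leq_trans M0 TM).
have h2 := contr _ _ (IH (T - M)%N lt).
move=> x y; apply: le_trans (oscD h1 h2 x y) _.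
rewrite le_eqVlt; apply/orP; left; apply/eqP; field.
by rewrite lt0r_neq0.
Qed.

End Chain.
Arguments Kop {R Z}.
Arguments Kop_osc {R Z K}.
Arguments Kop_lin {R Z}.
Arguments Gf {R Z}.

Section Paths.
Variable R : realType.
Variable Z : finType.

Fixpoint Bk (F : nat -> Z -> Z -> R) (k t0 : nat) (z : Z) : R :=
  match k with 0 => 1 | k'.+1 => \sum_z' F t0 z z' * Bk F k' t0.+1 z' end.

Definition fcons {N} (z : Z) (w : {ffun 'I_N.+1 -> Z}) : {ffun 'I_N.+2 -> Z} :=
  [ffun i => if unlift ord0 i is Some j then w j else z].
Definition ftail {N} (w : {ffun 'I_N.+2 -> Z}) : {ffun 'I_N.+1 -> Z} :=
  [ffun i => w (lift ord0 i)].

Lemma split_sum N (Phi : {ffun 'I_N.+2 -> Z} -> R) :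
  \sum_w Phi w = \sum_z \sum_(w' : {ffun 'I_N.+1 -> Z}) Phi (fcons z w').
Proof.
rewrite pair_big /=.
rewrite (reindex (fun p : Z * {ffun 'I_N.+1 -> Z} => fcons p.1 p.2)) //=.
apply: onW_bij; exists (fun w : {ffun 'I_N.+2 -> Z} => (w ord0, ftail w)).
  move=> [z w'] /=; congr pair.
    by rewrite /fcons ffunE unlift_none.
  by apply/ffunP => i; rewrite /ftail /fcons !ffunE liftK.
move=> w; apply/ffunP => i; rewrite /fcons /ftail ffunE /=.
by case: (unliftP ord0 i) => [j ->|->]; rewrite ?ffunE.
Qed.

Lemma PS (F : nat -> Z -> Z -> R) N : forall (G : Z -> R) t0,
  \sum_(w : {ffun 'I_N.+1 -> Z}) G (w ord0) *
     \prod_(t < N) F (t0 + t)%N (w (widen_ord (leqnSn N) t)) (w (lift ord0 t))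
  = \sum_z G z * Bk F N t0 z.
Proof.
elim: N => [|N IH] G t0.
  under eq_bigr do rewrite big_ord0 mulr1.
  under [RHS]eq_bigr do rewrite /= mulr1.
  rewrite (reindex (fun z : Z => [ffun _ : 'I_1 => z])) /=.
    by apply: eq_bigr => z _; rewrite ffunE.
  apply: onW_bij; exists (fun w : {ffun 'I_1 -> Z} => w ord0); first by move=> z; rewrite ffunE.
  by move=> w; apply/ffunP => i; rewrite ffunE (ord1 i).
rewrite split_sum; apply: eq_bigr => z _ /=.
rewrite -(IH (F t0 z) t0.+1) big_distrr /=.
apply: eq_bigr => w' _.
rewrite big_ord_recl /=.
have e0 : (fcons z w') ord0 = z by rewrite ffunE unlift_none.
have e1 : widen_ord (leqnSn N.+1) ord0 = ord0 :> 'I_N.+2 by apply: val_inj.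
have e2 i : widen_ord (leqnSn N.+1) (lift ord0 i) = lift ord0 (widen_ord (leqnSn N) i).
  by apply: val_inj.
rewrite e1 e0 addn0 [X in F t0 z X]ffunE liftK; congr (_ * (_ * _)).
apply: eq_bigr => i _.
by rewrite e2 !ffunE !liftK /bump /= addnS.
Qed.

End Paths.
Arguments Bk {R Z}.

Section Model.
Variable R : realType.
Variables (n m : nat).
Variables (Rk : ('I_n * 'I_m) -> 'I_n -> R) (gam : 'I_n -> 'I_m -> R)
  (phi : 'I_n * 'I_n -> 'I_n -> R).
Hypothesis sR : stochastic Rk.
Hypothesis sG : stochastic gam.
Hypothesis sP : stochastic phi.

Local Notation Zt := ('I_n * 'I_m * 'I_n)%type.
Local Notation XAt := ('I_n * 'I_m)%type.
Local Notation K := (Zkernel Rk gam phi).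
Local Notation XK := (XAkernel Rk gam phi).

Lemma Zk_xa (v : XAt -> R) (z : Zt) :
  Kop K (fun z' => v (z'.1.1, z'.1.2)) z = \sum_w' XK (z.1.1, z.1.2) w' * v w'.
Proof.
case: z => [[x a] y]; rewrite /Kop /XAkernel /=.
under [RHS]eq_bigr do rewrite big_distrl /=.
rewrite pair_big /=; apply: eq_bigr => [[[x' a'] y']] _ //=.
Qed.

Lemma XK0 w w' : 0 <= XK w w'.
Proof.
case: sR => R0 _; case: sG => G0 _; case: sP => P0 _.
by apply: sumr_ge0 => y _; rewrite !mulr_ge0.
Qed.

Lemma XK1 w : \sum_w' XK w w' = 1.
Proof.
case: sR => _ R1; case: sG => _ G1; case: sP => _ P1.
rewrite /XAkernel.
rewrite -(pair_big predT predT (fun x' a' => \sum_y' Rk w x' * phi (w.1, x') y' * gam y' a')) /=.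

have inner x' : \sum_(j < m) \sum_(y' < n) Rk w x' * phi (w.1, x') y' * gam y' j = Rk w x'.
  rewrite exchange_big /= -[RHS](mulr1 (Rk w x')) -(P1 (w.1, x')) big_distrr /=.
  apply: eq_bigr => y' _.
  by rewrite -big_distrr /= G1 mulr1.
under eq_bigr do rewrite inner.
exact: R1.
Qed.

Lemma K0 z z' : 0 <= K z z'.
Proof.
case: sR => R0 _; case: sG => G0 _; case: sP => P0 _.
by case: z => [[x a] y]; case: z' => [[x' a'] y'] /=; rewrite !mulr_ge0.
Qed.

Lemma K1 z : \sum_z' K z z' = 1.
Proof.
have := Zk_xa (fun _ => 1) z; rewrite /Kop.
under eq_bigr do rewrite mulr1.
by move=> ->; under eq_bigr do rewrite mulr1; rewrite XK1.
Qed.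

Lemma kpow0 k w w' : 0 <= kpow XK k w w'.
Proof.
elim: k w' => [|k IH] w' /=; first by rewrite ler0n.
by apply: sumr_ge0 => v _; rewrite mulr_ge0 // XK0.
Qed.

Lemma kpow1 k w : \sum_w' kpow XK k w w' = 1.
Proof.
elim: k => [|k IH] /=.
  rewrite (bigD1 w) //= eqxx big1 ?addr0 // => w' /negbTE.
  by rewrite eq_sym => ->.
rewrite exchange_big /= -IH; apply: eq_bigr => v _.
by rewrite -big_distrr /= XK1 mulr1.
Qed.

Lemma iter_xa k : forall (v : XAt -> R) (z : Zt),
  iter k (Kop K) (fun z' => v (z'.1.1, z'.1.2)) z
  = \sum_w kpow XK k (z.1.1, z.1.2) w * v w.
Proof.
elim: k => [|k IH] v z.
  rewrite /= (bigD1 (z.1.1, z.1.2)) //= eqxx mul1r big1 ?addr0 // => w /negbTE.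
  by rewrite eq_sym => ->; rewrite mul0r.
rewrite iterSr.
have -> : Kop K (fun z' => v (z'.1.1, z'.1.2)) =
    (fun z' => (fun w => \sum_w' XK w w' * v w') (z'.1.1, z'.1.2)).
  by apply: funext => z'; rewrite Zk_xa.
rewrite (IH (fun w => \sum_w' XK w w' * v w')).
under eq_bigr do rewrite big_distrr /=.
rewrite exchange_big /=; apply: eq_bigr => w' _.
by rewrite /= big_distrl /=; apply: eq_bigr => w _; rewrite mulrA.
Qed.

Lemma contraction m0 lam : doeblin XK m0 lam ->
  forall u c, osc u c -> osc (iter m0.+1 (Kop K) u) ((1 - lam) * c).
Proof.
move=> [lam0 [psi [[psi0 psi1] hdb]]] u c hu z1 z2.
rewrite iterSr.
pose v := fun w : XAt => Kop K u (w.1, w.2, z1.2).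
have -> : Kop K u = (fun z' => v (z'.1.1, z'.1.2)).
  by apply: funext => -[[x a] y].
rewrite !iter_xa.
have hs w w' : lam * psi w' <= kpow XK m0 w w'.
  by have := hdb w [set w']%SET; rewrite !big_set1.
pose a := fun w => kpow XK m0 (z1.1.1, z1.1.2) w - lam * psi w.
pose b := fun w => kpow XK m0 (z2.1.1, z2.1.2) w - lam * psi w.
have sa : \sum_w a w = 1 - lam.
  by rewrite /a sumrB kpow1 -big_distrr /= psi1 mulr1.
have sb : \sum_w b w = 1 - lam.
  by rewrite /b sumrB kpow1 -big_distrr /= psi1 mulr1.
have hv : osc v c by move=> w w'; rewrite /v; apply: (Kop_osc K0 K1).
have := @osc_lemma R XAt a b v c (z1.1.1, z1.1.2).
rewrite sa sb => H.
have e : \sum_w kpow XK m0 (z1.1.1, z1.1.2) w * v w -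
   \sum_w kpow XK m0 (z2.1.1, z2.1.2) w * v w =
   \sum_w a w * v w - \sum_w b w * v w.
  have ex : forall g : XAt -> R, \sum_w (g w - lam * psi w) * v w =
      \sum_w g w * v w - \sum_w lam * psi w * v w.
    by move=> g; rewrite -sumrB; apply: eq_bigr => w _; rewrite mulrBl.
  rewrite /a /b !ex; lra.
rewrite e; apply: H => // w; rewrite subr_ge0; exact: hs.
Qed.

End Model.

Section Helpers.
Variable R : realType.

Lemma Bk1 (Z : finType) (K : Z -> Z -> R) (K1 : forall z, \sum_z' K z z' = 1) k :
  forall t0 z, Bk (fun _ => K) k t0 z = 1.
Proof.
elim: k => [|k IH] t0 z //=.
by under eq_bigr do rewrite IH mulr1; rewrite K1.
Qed.

Lemma Bk_bound (Z : finType) (Fk : nat -> Z -> Z -> R) (E : R) (N : nat) :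
  0 <= E -> (forall t z z', (t < N)%N -> 0 <= Fk t z z') ->
  (forall t z, (t < N)%N -> \sum_z' Fk t z z' <= E) ->
  forall k t0 z, (t0 + k <= N)%N -> 0 <= Bk Fk k t0 z <= E ^+ k.
Proof.
move=> E0 F0 F1; elim=> [|k IH] t0 z hk /=; first by rewrite ler01 lexx.
have tN : (t0 < N)%N by apply: leq_trans hk; rewrite -addSnnS leq_addr.
have hk' : (t0.+1 + k <= N)%N by rewrite addSnnS.
apply/andP; split.
  by apply: sumr_ge0 => z' _; apply: mulr_ge0; [exact: F0 | by case/andP: (IH _ z' hk')].
apply: (@le_trans _ _ (\sum_z' Fk t0 z z' * E ^+ k)).
  apply: ler_sum => z' _; apply: ler_wpM2l; first exact: F0.
  by case/andP: (IH _ z' hk').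
by rewrite -big_distrl /= exprS; apply: ler_wpM2r; [exact: exprn_ge0 | exact: F1].
Qed.

Lemma minnz01 (A B : finType) (Q : A -> B -> R) :
  (forall a b, 0 <= Q a b) -> 0 <= min_nonzero Q <= 1.
Proof.
move=> Q0; rewrite /min_nonzero; apply/andP; split.
  apply: (big_ind (fun x => 0 <= x)) => //; first by move=> x y x0 y0; rewrite le_min x0 y0.
  move=> a _; apply: (big_ind (fun x => 0 <= x)) => //.
  by move=> x y x0 y0; rewrite le_min x0 y0.
apply: (big_rec (fun x => x <= 1)) => // a x _ x1.
by rewrite ge_min x1 orbT.
Qed.

Lemma supnorm_ge0 (Z : finType) (K f : Z -> Z -> R) : 0 <= supnorm_Omega K f.
Proof.
by apply: (big_ind (fun x => 0 <= x)) => // x y x0 y0; rewrite le_max x0.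
Qed.

Lemma supnorm_le (Z : finType) (K f : Z -> Z -> R) z z' :
  0 < K z z' -> `|f z z'| <= supnorm_Omega K f.
Proof. by move=> h; apply: (@le_bigmax_cond _ _ _ _ (z, z')). Qed.

End Helpers.

Theorem lemma5 (R : realType) (n m : nat)
  (Rk : ('I_n * 'I_m) -> 'I_n -> R) (gam : 'I_n -> 'I_m -> R)
  (phi : 'I_n * 'I_n -> 'I_n -> R)
  (p0 : ('I_n * 'I_m * 'I_n) -> R)
  (m0 : nat) (lam : R)
  (f : ('I_n * 'I_m * 'I_n) -> ('I_n * 'I_m * 'I_n) -> R)
  (N : nat) (eps : R) :
  stochastic Rk -> stochastic gam -> stochastic phi -> distribution p0 ->
  doeblin (XAkernel Rk gam phi) m0 lam ->
  let K := Zkernel Rk gam phi in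
  let lam1 := lam * min_nonzero Rk * min_nonzero gam ^+ 2
                  * min_nonzero phi ^+ 2 in
  let mu := 2 * (m0 + 2)%:R * supnorm_Omega K f / lam1 in
  let P := path_prob p0 K (N := N) in
  let S := Ssum f (N := N) in
  let ES := \sum_(w : {ffun 'I_N.+1 -> 'I_n * 'I_m * 'I_n}) P w * S w in
  0 < eps -> mu / eps < N%:R ->
  \sum_(w : {ffun 'I_N.+1 -> 'I_n * 'I_m * 'I_n} | N%:R * eps <= `|S w - ES|) P w
  <= 2 * expR (- 2 * ((N%:R * eps - mu) ^+ 2 / (N%:R * mu ^+ 2))).
Proof.
move=> sR sG sP [p00 p01] hdb K lam1 mu P S ES eps0 hN.
have hK0 : forall z z', 0 <= K z z' := @K0 R n m Rk gam phi sR sG sP.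
have hK1 : forall z, \sum_z' K z z' = 1 := @K1 R n m Rk gam phi sR sG sP.
have P0 w : 0 <= P w.
  by rewrite /P /path_prob; apply: mulr_ge0 => //; apply: prodr_ge0 => t _.
have P1 : \sum_w P w = 1.
  have := @PS R _ (fun _ => K) N p0 0.
  rewrite /P /path_prob => ->.
  by under eq_bigr do rewrite Bk1 // mulr1.
have [lam0 [psi [[psi0 psi1] hdb']]] := hdb.
have lam_le1 : lam <= 1.
  case: (pickP (fun w : 'I_n * 'I_m => true)) => [w0 _|none]; last first.
    move: psi1; rewrite big1 => [|w]; first by move=> /eqP; rewrite eq_sym oner_eq0.
    by have := none w.
  have eT : forall g : 'I_n * 'I_m -> R, \sum_(w' in [set: 'I_n * 'I_m]%SET) g w' = \sum_w' g w'.
    by move=> g; apply: eq_bigl => w'; rewrite !inE.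
  have := hdb' w0 [set: 'I_n * 'I_m]%SET; rewrite !eT psi1 mulr1.
  by rewrite (@kpow1 R n m Rk gam phi sR sG sP).
set F := supnorm_Omega K f.
have F0 : 0 <= F := @supnorm_ge0 R _ K f.
have fF z z' : 0 < K z z' -> `|f z z'| <= F := @supnorm_le R _ K f z z'.
pose h := fun z => \sum_z' K z z' * f z z'.
have hF z : `|h z| <= F.
  apply: le_trans (ler_norm_sum _ _ _) _.
  rewrite -[F]mul1r -(hK1 z) big_distrl /=; apply: ler_sum => z' _.
  rewrite normrM ger0_norm //.
  have := hK0 z z'; rewrite le_eqVlt => /orP[/eqP<-|kp]; first by rewrite !mul0r.
  by rewrite ler_pM2l // fF.
have [a0 a1] := andP (@minnz01 R _ _ Rk (proj1 sR)).
have [b0 b1] := andP (@minnz01 R _ _ gam (proj1 sG)).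
have [c0 c1] := andP (@minnz01 R _ _ phi (proj1 sP)).
have lam1ge0 : 0 <= lam1 by rewrite /lam1 !mulr_ge0 ?exprn_ge0 // ltW.
have lam1le : lam1 <= lam.
  rewrite /lam1 -mulrA -mulrA; apply: ler_piMr; first exact: ltW.
  rewrite mulrA; apply: mulr_ile1; rewrite ?mulr_ge0 ?exprn_ge0 //.
    by apply: mulr_ile1; rewrite ?exprn_ge0 // expr_le1.
  by rewrite expr_le1.
have mu0 : 0 <= mu by rewrite /mu; apply: divr_ge0 => //; rewrite !mulr_ge0 // ler0n.
have [mueq|mupos] := eqVneq mu 0.
  apply: (@le_trans _ _ 1).
    rewrite -P1 big_mkcond /=; apply: ler_sum => w _; case: ifP => // _; exact: P0.
  by rewrite mueq expr0n /= mulr0 invr0 mulr0 mulr0 expR0 mulr1 ler1n.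
have mup : 0 < mu by rewrite lt_neqAle eq_sym mupos.
have lam1p : 0 < lam1.
  rewrite lt_neqAle lam1ge0 andbT; apply/eqP => e.
  by move: mup; rewrite /mu -e invr0 mulr0 ltxx.
have Fp : 0 < F.
  rewrite lt_neqAle F0 andbT; apply/eqP => e.
  by move: mup; rewrite /mu -/F -e mulr0 mul0r ltxx.
pose M := m0.+1.
have contr := @contraction R n m Rk gam phi sR sG sP m0 lam hdb.
pose G := Gf K h.
have oscG T : osc (G T) (2 * F * M%:R / lam) :=
  @Gf_osc R _ K hK0 hK1 h F hF M lam (ltn0Sn m0) lam0 lam_le1 contr T.
have Lmu : 2 * F + 2 * F * M%:R / lam <= mu.
  have e2 : (m0 + 2)%:R = M%:R + 1 :> R by rewrite addn2 mulrSr.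
  have X0 : 0 <= 2 * (m0 + 2)%:R * F by rewrite !mulr_ge0 // ler0n.
  have step1 : 2 * (m0 + 2)%:R * F / lam <= mu.
    rewrite /mu -/F; apply: ler_wpM2l => //.
    by rewrite lef_pV2 ?posrE.
  apply: le_trans step1.
  have e3 : 2 * (m0 + 2)%:R * F / lam = 2 * F / lam + 2 * F * M%:R / lam.
    by rewrite e2; field; rewrite lt0r_neq0.
  rewrite e3 lerD2r ler_pdivlMr //.
  by rewrite -[X in _ <= X]mulr1 ler_wpM2l //; lra.
have oscmu : 2 * F * M%:R / lam <= mu.
  by apply: le_trans Lmu; rewrite lerDr; apply: mulr_ge0 => //; lra.
pose c := \sum_z p0 z * G N z.
pose Dt := fun (t : nat) (z z' : Zs n m) => f z z' + G (N - t.+1)%N z' - G (N - t)%N z.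
pose D0 := fun z => G N z - c.
have tele w : S w - c = D0 (w ord0) +
    \sum_(t < N) Dt t (w (widen_ord (leqnSn N) t)) (w (lift ord0 t)).
  pose a := fun k : nat => G (N - k)%N (w (inord k)).
  have tl : \sum_(t < N) (G (N - t.+1)%N (w (lift ord0 t)) -
      G (N - t)%N (w (widen_ord (leqnSn N) t))) = - G N (w ord0).
    transitivity (\sum_(t < N) (a t.+1 - a t)).
      apply: eq_bigr => t _; rewrite /a.
      have e1 : lift ord0 t = inord t.+1 :> 'I_N.+1.
        apply: val_inj; rewrite /= inordK; first by rewrite /bump leq0n add1n.
        by rewrite ltnS.
      have e2 : widen_ord (leqnSn N) t = inord t :> 'I_N.+1.
        by apply: val_inj; rewrite /= inordK // ltnS ltnW.
      by rewrite e1 e2.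
    rewrite -(big_mkord xpredT (fun t => a t.+1 - a t)) telescope_sumr // /a subnn subn0.
    have e3 : inord 0 = ord0 :> 'I_N.+1 by apply: val_inj; rewrite /= inordK.
    by rewrite e3 /= add0r.
  have -> : \sum_(t < N) Dt t (w (widen_ord (leqnSn N) t)) (w (lift ord0 t))
      = S w - G N (w ord0).
    rewrite -tl /S /Ssum -big_split /=; apply: eq_bigr => t _.
    by rewrite /Dt addrA.
  by rewrite /D0; ring.
have mgf s : \sum_w P w * expR (s * (S w - c)) <= expR (s ^+ 2 * mu ^+ 2 / 8) ^+ N.+1.
  set E := expR (s ^+ 2 * mu ^+ 2 / 8).
  pose Fk := fun t z z' => K z z' * expR (s * Dt t z z').
  have eqw w : P w * expR (s * (S w - c)) =
      (fun z => p0 z * expR (s * D0 z)) (w ord0) *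
      \prod_(t < N) Fk (0 + t)%N (w (widen_ord (leqnSn N) t)) (w (lift ord0 t)).
    rewrite tele mulrDr expRD big_distrr /= expR_sum /P /path_prob /Fk /= big_split /=.
    ring.
  rewrite (eq_bigr _ (fun w _ => eqw w)).
  rewrite (@PS R _ Fk N (fun z => p0 z * expR (s * D0 z)) 0%N).
  have hFk0 t z z' : (t < N)%N -> 0 <= Fk t z z'.
    by move=> _; rewrite /Fk mulr_ge0 ?expR_ge0.
  have hFk1 t z : (t < N)%N -> \sum_z' Fk t z z' <= E.
    move=> tN; rewrite /Fk /E; apply: hoeff => //.
    - have e : G (N - t)%N = fun z => h z + Kop K (G (N - t.+1)%N) z.
        by rewrite -(subnSK tN).
      rewrite /Dt e /h /Kop.
      under eq_bigr do rewrite mulrBr mulrDr.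
      by rewrite sumrB big_split /= -big_distrl /= hK1 mul1r subrr.
    - move=> z1 z2 k1 k2; rewrite /Dt.
      have := fF _ _ k1; have := fF _ _ k2; rewrite !ler_norml => /andP[u1 u2] /andP[v1 v2].
      have := oscG (N - t.+1)%N z1 z2.
      move: Lmu; lra.
  have hB := @Bk_bound R _ Fk E N (expR_ge0 _) hFk0 hFk1 N 0%N.
  apply: (@le_trans _ _ (\sum_z (p0 z * expR (s * D0 z)) * E ^+ N)).
    apply: ler_sum => z _; apply: ler_wpM2l; first by rewrite mulr_ge0 ?expR_ge0.
    by case/andP: (hB z (leqnn N)).
  rewrite -big_distrl /= exprSr mulrC ler_wpM2l ?exprn_ge0 ?expR_ge0 //.
  rewrite /E; apply: hoeff => //.
    under eq_bigr do rewrite /D0 mulrBr.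
    by rewrite sumrB -big_distrl /= p01 mul1r subrr.
  move=> z1 z2 _ _; rewrite /D0.
  by have := oscG N z1 z2; move: oscmu; lra.
have jen s : expR (s * (ES - c)) <= \sum_w P w * expR (s * (S w - c)).
  set T := ES - c.
  have pt w : P w * (expR (s * T) * (1 + (s * (S w - c) - s * T))) <=
      P w * expR (s * (S w - c)).
    apply: ler_wpM2l => //.
    have -> : expR (s * (S w - c)) = expR (s * T) * expR (s * (S w - c) - s * T).
      by rewrite -expRD; congr expR; ring.
    by apply: ler_wpM2l; [exact: expR_ge0 | exact: expR_ge1Dx].
  apply: le_trans (ler_sum _ (fun w _ => pt w)).
  have -> : \sum_w P w * (expR (s * T) * (1 + (s * (S w - c) - s * T))) =
      expR (s * T) * (\sum_w P w) + (expR (s * T) * s) * (\sum_w P w * S w)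
      - (expR (s * T) * s * (c + T)) * (\sum_w P w).
    rewrite !big_distrr /= -big_split -sumrB /=; apply: eq_bigr => w _; ring.
  rewrite P1 -/ES /T le_eqVlt; apply/orP; left; apply/eqP; ring.
have eN : N.+1%:R = N%:R + 1 :> R by rewrite mulrSr.
set C := (N%:R + 1) * mu ^+ 2 / 8.
have Cp : 0 < C.
  rewrite /C; apply: divr_gt0 => //; apply: mulr_gt0; last exact: exprn_gt0.
  by apply: ltr_wpDl => //; rewrite ler0n.
have mgfC s : \sum_w P w * expR (s * (S w - c)) <= expR (C * s ^+ 2).
  apply: le_trans (mgf s) _; rewrite -expRM_natl ler_expR eN /C.
  by rewrite le_eqVlt; apply/orP; left; apply/eqP; ring.
have Tzero : ES = c.
  have key s : s * (ES - c) <= C * s ^+ 2.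
    by have := le_trans (jen s) (mgfC s); rewrite ler_expR.
  set Tm := ES - c.
  have := key (Tm / (2 * C)).
  have e1 : Tm / (2 * C) * Tm = 2 * (Tm ^+ 2 / (4 * C)).
    by field; rewrite lt0r_neq0.
  have e2 : C * (Tm / (2 * C)) ^+ 2 = Tm ^+ 2 / (4 * C).
    by field; rewrite lt0r_neq0.
  rewrite e1 e2 => H.
  have hx0 : 0 <= Tm ^+ 2 / (4 * C) by apply: divr_ge0; [exact: sqr_ge0 | lra].
  have : Tm ^+ 2 / (4 * C) = 0 by apply/le_anti; rewrite hx0 andbT; lra.
  move/eqP; rewrite mulf_eq0 invr_eq0 => /orP[|/eqP]; last by lra.
  by rewrite sqrf_eq0 subr_eq0 => /eqP.
have Npos : 0 < N%:R :> R.
  by apply: lt_trans hN; apply: divr_gt0.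
have hN' : mu < N%:R * eps by rewrite -ltr_pdivrMr.
case: (lerP eps mu) => [emu|mue]; last first.
  have hsupp w : P w != 0 -> forall t : 'I_N,
      0 < K (w (widen_ord (leqnSn N) t)) (w (lift ord0 t)).
    move=> Pw t.
    have := hK0 (w (widen_ord (leqnSn N) t)) (w (lift ord0 t)).
    rewrite le_eqVlt => /orP[/eqP e|//].
    by move: Pw; rewrite /P /path_prob (bigD1 t) //= -e mul0r mulr0 eqxx.
  have hSb w : P w != 0 -> `|S w| <= N%:R * F.
    move=> Pw; rewrite /S /Ssum; apply: le_trans (ler_norm_sum _ _ _) _.
    apply: (@le_trans _ _ (\sum_(t < N) F)).
      by apply: ler_sum => t _; apply: fF; apply: hsupp.
    by rewrite sumr_const card_ord mulr_natl.
  have hES : `|ES| <= N%:R * F.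
    rewrite /ES; apply: le_trans (ler_norm_sum _ _ _) _.
    apply: (@le_trans _ _ (\sum_w P w * (N%:R * F))); last first.
      by rewrite -big_distrl /= P1 mul1r.
    apply: ler_sum => w _.
    rewrite normrM ger0_norm //; case: (eqVneq (P w) 0) => [->|Pw]; first by rewrite !mul0r.
    have Pp : 0 < P w by rewrite lt_neqAle eq_sym Pw P0.
    by rewrite ler_pM2l //; apply: hSb.
  rewrite big1; first by rewrite mulr_ge0 // expR_ge0.
  move=> w hw; apply/eqP; apply/negPn/negP => Pw.
  have := hSb w Pw.
  have tri : `|S w - ES| <= `|S w| + `|ES| := ler_normB _ _.
  have h1 : 2 * (N%:R * F) <= N%:R * mu.
    have h0 : 0 <= 2 * F * M%:R / lam.
      apply: divr_ge0; last exact: ltW.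
      by apply: mulr_ge0; [lra | rewrite ler0n].
    have h2F : 2 * F <= mu by move: Lmu h0; lra.
    by rewrite mulrCA; apply: ler_wpM2l => //; exact: ltW.
  have h2 : N%:R * mu < N%:R * eps by rewrite ltr_pM2l.
  move: hw hES; lra.
set r := N%:R * eps in hN' *.
have rle : r <= N%:R * mu by rewrite /r ler_wpM2l // ltW.
set s := r / (2 * C).
have s0 : 0 <= s by rewrite /s divr_ge0 //; lra.
have mg s' : \sum_w P w * expR (s' * (S w - ES)) <= expR (C * s' ^+ 2).
  by rewrite Tzero; apply: mgfC.
apply: (@le_trans _ _ (\sum_(w | r <= `|S w - ES|) P w *
    (expR (s * (S w - ES) - s * r) + expR (- s * (S w - ES) - s * r)))).
  apply: ler_sum => w hw; rewrite -[X in X <= _]mulr1; apply: ler_wpM2l => //.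
  case: (lerP 0 (S w - ES)) => hX.
    rewrite ger0_norm // in hw.
    have : 1 <= expR (s * (S w - ES) - s * r).
      by rewrite -expR0 ler_expR subr_ge0 ler_wpM2l.
    by have := expR_ge0 (- s * (S w - ES) - s * r); lra.
  rewrite ltr0_norm // in hw.
  have : 1 <= expR (- s * (S w - ES) - s * r).
    by rewrite -expR0 ler_expR subr_ge0 mulNr -mulrN ler_wpM2l.
  by have := expR_ge0 (s * (S w - ES) - s * r); lra.
apply: (@le_trans _ _ (\sum_w P w *
    (expR (s * (S w - ES) - s * r) + expR (- s * (S w - ES) - s * r)))).
  rewrite [X in X <= _]big_mkcond /=; apply: ler_sum => w _; case: ifP => // _.
  by apply: mulr_ge0 => //; apply: addr_ge0; exact: expR_ge0.
have -> : \sum_w P w * (expR (s * (S w - ES) - s * r) + expR (- s * (S w - ES) - s * r))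
    = expR (- (s * r)) * (\sum_w P w * expR (s * (S w - ES)) +
                          \sum_w P w * expR (- s * (S w - ES))).
  rewrite -big_split big_distrr /=; apply: eq_bigr => w _.
  by rewrite !expRD; ring.
apply: (@le_trans _ _ (expR (- (s * r)) * (2 * expR (C * s ^+ 2)))).
  rewrite ler_pM2l ?expR_gt0 //.
  by have := mg s; have := mg (- s); rewrite sqrrN; lra.
have -> : expR (- (s * r)) * (2 * expR (C * s ^+ 2)) = 2 * expR (- (s * r) + C * s ^+ 2).
  by rewrite expRD; ring.
rewrite ler_pM2l // ler_expR.
have e : - (s * r) + C * s ^+ 2 = - (r ^+ 2 / (4 * C)).
  by rewrite /s; field; rewrite lt0r_neq0.
rewrite e.
have k1 : (N%:R + 1) * (r - mu) ^+ 2 <= N%:R * r ^+ 2.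
  have q1 : 0 <= (r - mu) * (N%:R * mu - (r - mu)) by apply: mulr_ge0; lra.
  have q2 : 0 <= N%:R * mu * r by apply: mulr_ge0; [apply: mulr_ge0 | ]; lra.
  have -> : N%:R * r ^+ 2 = (N%:R + 1) * (r - mu) ^+ 2 +
      ((r - mu) * (N%:R * mu - (r - mu)) + N%:R * mu * r) by ring.
  by rewrite lerDl; apply: addr_ge0.
have Nne : N%:R != 0 :> R by rewrite lt0r_neq0.
have N1ne : N%:R + 1 != 0 :> R by rewrite lt0r_neq0 // ltr_wpDl // ltW.
have mune : mu != 0 by rewrite lt0r_neq0.
have eq : r ^+ 2 / (4 * C) - 2 * ((r - mu) ^+ 2 / (N%:R * mu ^+ 2)) =
    2 * (N%:R * r ^+ 2 - (N%:R + 1) * (r - mu) ^+ 2) / (N%:R * (N%:R + 1) * mu ^+ 2).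
  by rewrite /C; field; rewrite ?Nne ?N1ne ?mune.
have : 0 <= 2 * (N%:R * r ^+ 2 - (N%:R + 1) * (r - mu) ^+ 2) / (N%:R * (N%:R + 1) * mu ^+ 2).
  apply: divr_ge0; first by apply: mulr_ge0 => //; lra.
  by apply: mulr_ge0; [apply: mulr_ge0 | apply: exprn_ge0]; lra.
rewrite -eq; lra.
Qed.
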